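(* Let $\mathcal A$ be a non-associative algebra. If there exists a qualitative representation $\phi$ of $\mathcal A$ such that for all $a,b,c,d\in A$ $$(a^\phi\circ b^\phi)\cap(c^\phi\circ d^\phi)=\varnothing\iff (a;b)\cdot(c;d)=0,$$ then $\mathcal A$ is associative, i.e. $(a;b);c=a;(b;c)$ for all $a,b,c\in A$.
   Context: A non-associative algebra is an algebra $(A,0,1,+,-,1',\breve{\ },;)$ such that $(A,0,1,+,-)$ is a boolean algebra (with $x\cdot y=-(-x+-y)$ and $x\le y\iff x+y=y$); $1';x=x=x;1'$, $\breve{\breve x}=x$, $(x;y)\breve{}=\breve y;\breve x$; $\breve 0=x;0=0$, $(x+y)\breve{}=\breve x+\breve y$, $x;(y+z)=x;y+x;z$; and the Peircean law holds: $x;y\cdot\breve z=0$ iff $y;z\cdot\breve x=0$. For binary relations, $r\circ s=\{(x,y):\exists z\,(x,z)\in r,(z,y)\in s\}$, $\breve r=\{(y,x):(x,y)\in r\}$, $\mathrm{Id}_D=\{(x,x):x\in D\}$. A qualitative representation of $\mathcal A$ over base $D$ is an injective map $\phi:A\to\wp(D\times D)$ such that $0^\phi=\varnothing$, $1^\phi=D\times D$, $(1')^\phi=\mathrm{Id}_D$, $(a+b)^\phi=a^\phi\cup b^\phi$, $(-a)^\phi=(D\times D)\setminus a^\phi$, $(\breve a)^\phi=(a^\phi)\breve{}$, and for all $a,b,c\in A$: $c^\phi\supseteq a^\phi\circ b^\phi\iff c\ge a;b$. *)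

(* Defs.v *)
Record NAAlg := {
  carrier :> Type;
  zero : carrier;
  one : carrier;
  plus : carrier -> carrier -> carrier;
  compl : carrier -> carrier;
  ident : carrier;
  conv : carrier -> carrier;
  comp : carrier -> carrier -> carrier
}.

Definition meet (A : NAAlg) (x y : A) : A :=
  compl A (plus A (compl A x) (compl A y)).

Definition le (A : NAAlg) (x y : A) : Prop := plus A x y = y.

(* (A,0,1,+,-) is a boolean algebra: Huntington's (1904) axioms. *)
Definition is_boolean_algebra (A : NAAlg) : Prop :=
  (forall x y : A, plus A x y = plus A y x) /\
  (forall x y : A, meet A x y = meet A y x) /\
  (forall x y z : A, plus A x (meet A y z) = meet A (plus A x y) (plus A x z)) /\
  (forall x y z : A, meet A x (plus A y z) = plus A (meet A x y) (meet A x z)) /\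
  (forall x : A, plus A x (zero A) = x) /\
  (forall x : A, meet A x (one A) = x) /\
  (forall x : A, plus A x (compl A x) = one A) /\
  (forall x : A, meet A x (compl A x) = zero A).

Definition is_non_associative_algebra (A : NAAlg) : Prop :=
  is_boolean_algebra A /\
  (forall x : A, comp A (ident A) x = x /\ comp A x (ident A) = x) /\
  (forall x : A, conv A (conv A x) = x) /\
  (forall x y : A, conv A (comp A x y) = comp A (conv A y) (conv A x)) /\
  (conv A (zero A) = zero A) /\
  (forall x : A, comp A x (zero A) = zero A) /\
  (forall x y : A, conv A (plus A x y) = plus A (conv A x) (conv A y)) /\
  (forall x y z : A, comp A x (plus A y z) = plus A (comp A x y) (comp A x z)) /\
  (forall x y z : A,
     meet A (comp A x y) (conv A z) = zero A <->
     meet A (comp A y z) (conv A x) = zero A).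

Definition rel (D : Type) := D -> D -> Prop.
Definition rel_eq {D} (r s : rel D) : Prop := forall x y, r x y <-> s x y.
Definition rel_sub {D} (r s : rel D) : Prop := forall x y, r x y -> s x y.
Definition rel_comp {D} (r s : rel D) : rel D :=
  fun x y => exists z, r x z /\ s z y.
Definition rel_conv {D} (r : rel D) : rel D := fun x y => r y x.
Definition rel_empty {D} : rel D := fun _ _ => False.
Definition rel_full {D} : rel D := fun _ _ => True.
Definition rel_id {D} : rel D := fun x y => x = y.
Definition rel_union {D} (r s : rel D) : rel D := fun x y => r x y \/ s x y.
Definition rel_cmpl {D} (r : rel D) : rel D := fun x y => ~ r x y.
Definition rel_inter {D} (r s : rel D) : rel D := fun x y => r x y /\ s x y.

Definition qualitative_representation (A : NAAlg) (D : Type)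
    (phi : A -> rel D) : Prop :=
  (forall a b : A, rel_eq (phi a) (phi b) -> a = b) /\
  rel_eq (phi (zero A)) rel_empty /\
  rel_eq (phi (one A)) rel_full /\
  rel_eq (phi (ident A)) rel_id /\
  (forall a b : A, rel_eq (phi (plus A a b)) (rel_union (phi a) (phi b))) /\
  (forall a : A, rel_eq (phi (compl A a)) (rel_cmpl (phi a))) /\
  (forall a : A, rel_eq (phi (conv A a)) (rel_conv (phi a))) /\
  (forall a b c : A,
     rel_sub (rel_comp (phi a) (phi b)) (phi c) <-> le A (comp A a b) c).

(* Main.v *)
Require Import Defs.
From Stdlib Require Import Classical.

Theorem mainTheorem4 (A : NAAlg) (HA : is_non_associative_algebra A) :
  (exists (D : Type) (phi : A -> rel D),
     qualitative_representation A D phi /\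
     (forall a b c d : A,
        rel_eq (rel_inter (rel_comp (phi a) (phi b)) (rel_comp (phi c) (phi d)))
               rel_empty
        <-> meet A (comp A a b) (comp A c d) = zero A)) ->
  forall a b c : A, comp A (comp A a b) c = comp A a (comp A b c).
Proof.
  destruct HA as [HBA [Hid [Hcc [Hcc2 [Hc0 [Hx0 [Hcp [Hdist Hpe]]]]]]]].
  intros [D [phi [[Hinj [H0 [H1 [Hi [Hp [Hcm [Hcv Hq]]]]]]] Hcond]]] a b c.
  assert (Hrefl : forall x : A, le A x x).
  { intro x. unfold le. apply Hinj. intros u v. pose proof (Hp x x u v) as HH. unfold rel_union in HH. tauto. }
  assert (Hsub : forall x y : A, rel_sub (rel_comp (phi x) (phi y)) (phi (comp A x y))).
  { intros x y. apply Hq. apply Hrefl. }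
  assert (Hfm : forall X Y Z : A, meet A (comp A X Y) (compl A Z) = zero A ->
                 le A (comp A X Y) Z).
  { intros X Y Z H. apply Hq. intros u v Huv.
    destruct (classic (phi Z u v)) as [h|h]; [exact h|exfalso].
    assert (Hm : meet A (comp A X Y) (comp A (compl A Z) (ident A)) = zero A)
      by (destruct (Hid (compl A Z)) as [_ ->]; exact H).
    apply Hcond in Hm. apply (Hm u v). split; [exact Huv|].
    exists v. split. apply Hcm. exact h. apply Hi. reflexivity. }
  assert (Hcyc : forall x y z : A, meet A (comp A z x) (conv A y) = zero A ->
            meet A (comp A x y) (conv A z) = zero A).
  { intros x y z H. apply Hpe. rewrite <- (Hcc y) in H.
    apply Hpe in H. rewrite Hcc in H. exact H. }
  assert (L1 : le A (comp A (comp A a b) c) (comp A a (comp A b c))).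
  { apply Hfm. set (e := compl A (comp A a (comp A b c))).
    rewrite <- (Hcc e). apply Hpe. rewrite Hcc2.
    apply Hcond. intros u v. split; [|intro F; destruct F].
    intros [[w [Hc' He']] [s [Hb' Ha']]].
    apply (proj1 (Hcv _ _ _)) in He'. apply (proj1 (Hcv _ _ _)) in Hb'. apply (proj1 (Hcv _ _ _)) in Ha'. unfold rel_conv in *.
    apply (proj1 (Hcm _ _ _)) in He'. apply He'. apply Hsub. exists s. split; [exact Ha'|].
    apply Hsub. exists u. split; assumption. }
  assert (L2 : le A (comp A a (comp A b c)) (comp A (comp A a b) c)).
  { apply Hfm. set (e := compl A (comp A (comp A a b) c)).
    rewrite <- (Hcc e). apply Hcyc. rewrite Hcc2.
    apply Hcond. intros u v. split; [|intro F; destruct F].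
    intros [[r [He' Ha']] [s [Hc' Hb']]].
    apply (proj1 (Hcv _ _ _)) in He'. apply (proj1 (Hcv _ _ _)) in Hc'. apply (proj1 (Hcv _ _ _)) in Hb'. unfold rel_conv in *.
    apply (proj1 (Hcm _ _ _)) in He'. apply He'. apply Hsub. exists s. split; [|exact Hc'].
    apply Hsub. exists v. split; assumption. }
  unfold le in L1, L2. destruct HBA as [Hpc _].
  rewrite <- L1, <- L2 at 1. rewrite Hpc. reflexivity.
Qed.
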